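(* (Stride Lemma) Let $f,g\in\breve{\mathcal D}$ satisfy $g\lhd f$ and $\sigma(g)>0$. Then $f(\sigma(f)x)\le g(\sigma(g)x)$ for all $x\in[0,\frac1{\sigma(f)}]$ (i.e. $f_{[\sigma(f)]}\le g_{[\sigma(g)]}$), and $\sigma(g)\int f<\sigma(f)\int g$.
   Context: $\int f:=\int_0^1f(x)\,dx$. $\breve{\mathcal D}$: the set of continuous, convex, strictly decreasing $f\colon[0,1]\to[0,1]$ with $f(0)=1$, $f(1)=0$. Stride: $\sigma(g):=\sup\{\alpha\ge0:\ \alpha-x\le\alpha g(x)\ \forall x\in[0,1]\}\in[0,1]$. For $f$ and $a>0$, $f_{[a]}(x):=f(ax)$ on $[0,\frac1a]$; for $b>0$, $f_{[a]}-bg$ is considered on $[0,\min\{1,\frac1a\}]$. Sign switches: for continuous $\Delta\colon[c_0,d_0]\to\mathbb R$, a closed subinterval $[c,d]$ with $c_0<c\le d<d_0$ and $\Delta([c,d])=\{0\}$ is a sign switch if there is $\delta\in(0,\min\{c-c_0,d_0-d\}]$ with $\Delta(c-x)\Delta(d+x)<0$ for all $x\in(0,\delta]$; $\chi\Delta$ is their number. Crossing number $\chi(f,g):=\sup\{\chi(f_{[a]}-bg):a,b>0\}$. Domination $g\lhd f$: $\chi(f,g)=2$ and $g\le f$ pointwise. *)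

(* Defs.v *)
From Stdlib Require Import Reals List.
From Coquelicot Require Import Coquelicot.
Open Scope R_scope.

Definition I01 (x : R) : Prop := 0 <= x <= 1.

Definition Dbreve (f : R -> R) : Prop :=
  (forall x, I01 x -> filterlim f (within I01 (locally x)) (locally (f x))) /\
  (forall x y t, I01 x -> I01 y -> 0 <= t <= 1 ->
      f (t * x + (1 - t) * y) <= t * f x + (1 - t) * f y) /\
  (forall x y, I01 x -> I01 y -> x < y -> f y < f x) /\
  (forall x, I01 x -> 0 <= f x <= 1) /\
  f 0 = 1 /\ f 1 = 0.

Definition stride_set (g : R -> R) (alpha : R) : Prop :=
  0 <= alpha /\ forall x, I01 x -> alpha - x <= alpha * g x.

Definition stride (g : R -> R) : R := real (Lub_Rbar (stride_set g)).

Definition dil (f : R -> R) (a : R) : R -> R := fun x => f (a * x).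

Definition sign_switch (Delta : R -> R) (c0 d0 : R) (cd : R * R) : Prop :=
  let c := fst cd in let d := snd cd in
  c0 < c /\ c <= d /\ d < d0 /\
  (forall x, c <= x <= d -> Delta x = 0) /\
  exists delta, 0 < delta /\ delta <= Rmin (c - c0) (d0 - d) /\
    forall x, 0 < x <= delta -> Delta (c - x) * Delta (d + x) < 0.

Definition chi_ge (Delta : R -> R) (c0 d0 : R) (n : nat) : Prop :=
  exists l : list (R * R), List.length l = n /\ List.NoDup l /\
    List.Forall (sign_switch Delta c0 d0) l.

Definition crossing_ge (f g : R -> R) (n : nat) : Prop :=
  exists a b, 0 < a /\ 0 < b /\
    chi_ge (fun x => dil f a x - b * g x) 0 (Rmin 1 (/ a)) n.

(* chi(f,g) = n  (supremum over a,b > 0 of counts in N u {oo} equals n). *)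
Definition crossing_eq (f g : R -> R) (n : nat) : Prop :=
  crossing_ge f g n /\ ~ crossing_ge f g (S n).

Definition dominated (g f : R -> R) : Prop :=
  crossing_eq f g 2 /\ forall x, I01 x -> g x <= f x.

(* Main.v *)
Require Import Defs.
From Stdlib Require Import Reals Lra Classical List.
From Coquelicot Require Import Coquelicot.
Open Scope R_scope.

Definition clamp (x:R) : R := if Rle_dec x 0 then 0 else if Rle_dec 1 x then 1 else x.

Lemma clamp_I01 x : I01 (clamp x).
Proof. unfold clamp, I01; destruct (Rle_dec x 0); [lra|]; destruct (Rle_dec 1 x); lra. Qed.

Lemma clamp_id x : I01 x -> clamp x = x.
Proof. unfold clamp, I01; intros; destruct (Rle_dec x 0); [lra|]; destruct (Rle_dec 1 x); lra. Qed.

Lemma clamp_lip x y : Rabs (clamp x - clamp y) <= Rabs (x - y).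
Proof.
  unfold clamp; destruct (Rle_dec x 0); destruct (Rle_dec y 0);
  try destruct (Rle_dec 1 x); try destruct (Rle_dec 1 y);
  unfold Rabs; repeat destruct Rcase_abs; lra.
Qed.

Lemma within_eps (f : R -> R) x :
  filterlim f (within I01 (locally x)) (locally (f x)) ->
  forall eps, 0 < eps -> exists del, 0 < del /\
    forall y, I01 y -> Rabs (y - x) < del -> Rabs (f y - f x) < eps.
Proof.
  intros H eps Heps.
  destruct (proj1 (filterlim_locally f (f x)) H (mkposreal eps Heps)) as [d Hd].
  exists d; split; [apply cond_pos|].
  intros y Hy Hyx. specialize (Hd y Hyx Hy). exact Hd.
Qed.

Definition ext (f : R -> R) (x : R) := f (clamp x).

Lemma ext_cont f : (forall x, I01 x -> filterlim f (within I01 (locally x)) (locally (f x))) ->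
  forall x, continuity_pt (ext f) x.
Proof.
  intros Hc x. unfold continuity_pt, continue_in, limit1_in, limit_in. intros eps Heps.
  destruct (within_eps f (clamp x) (Hc _ (clamp_I01 x)) eps Heps) as [d [Hd H]].
  exists d; split; [lra|]. intros y [_ Hy]. unfold ext. simpl in *. unfold R_dist in *.
  apply H. apply clamp_I01. eapply Rle_lt_trans. apply clamp_lip. exact Hy.
Qed.

Lemma ext_eq f x : I01 x -> ext f x = f x.
Proof. intros; unfold ext; rewrite clamp_id; auto. Qed.

Definition convex_on (p : R -> R) (A B : R) : Prop :=
  forall x y t, A <= x <= B -> A <= y <= B -> 0 <= t <= 1 ->
    p (t * x + (1 - t) * y) <= t * p x + (1 - t) * p y.

Definition chord (p : R -> R) (x y : R) := (p y - p x) / (y - x).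

Lemma div_le a b d1 d2 : 0 < d1 -> 0 < d2 -> a * d2 <= b * d1 -> a / d1 <= b / d2.
Proof.
  intros H1 H2 H.
  replace (a / d1) with ((a * d2) * / (d1 * d2)) by (field; lra).
  replace (b / d2) with ((b * d1) * / (d1 * d2)) by (field; lra).
  apply Rmult_le_compat_r; [left; apply Rinv_0_lt_compat; nra | exact H].
Qed.

Lemma three_point p A B x y z : convex_on p A B -> A <= x -> x < y -> y < z -> z <= B ->
  (z - x) * p y <= (z - y) * p x + (y - x) * p z.
Proof.
  intros Hc Hx Hxy Hyz Hz.
  set (t := (z - y) / (z - x)).
  assert (Ht : 0 <= t <= 1).
  { unfold t; split. apply Rmult_le_pos; [lra| left; apply Rinv_0_lt_compat; lra].
    apply (Rmult_le_reg_r (z - x)); [lra|]. unfold Rdiv. rewrite Rmult_assoc, Rinv_l; lra. }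
  assert (Hy : t * x + (1 - t) * z = y) by (unfold t; field; lra).
  pose proof (Hc x z t ltac:(lra) ltac:(lra) Ht) as H. rewrite Hy in H.
  assert (E1 : (z - x) * t = z - y) by (unfold t; field; lra).
  assert (E2 : (z - x) * (1 - t) = y - x) by (unfold t; field; lra).
  apply (Rmult_le_compat_l (z - x)) in H; [|lra].
  rewrite Rmult_plus_distr_l, <- !Rmult_assoc, E1, E2 in H. exact H.
Qed.

Lemma chord_le1 p A B x y z : convex_on p A B -> A <= x -> x < y -> y < z -> z <= B ->
  chord p x y <= chord p x z.
Proof.
  intros. pose proof (three_point p A B x y z H H0 H1 H2 H3). unfold chord.
  apply div_le; nra.
Qed.

Lemma chord_le2 p A B x y z : convex_on p A B -> A <= x -> x < y -> y < z -> z <= B ->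
  chord p x z <= chord p y z.
Proof.
  intros. pose proof (three_point p A B x y z H H0 H1 H2 H3). unfold chord.
  apply div_le; nra.
Qed.

Lemma chord_mono p A B u v x y : convex_on p A B -> A <= u -> u < v -> x < y -> y <= B ->
  u <= x -> v <= y -> chord p u v <= chord p x y.
Proof.
  intros Hc Hu Huv Hxy HyB Hux Hvy.
  apply Rle_trans with (chord p u y).
  - destruct (Req_dec v y) as [->|Hne]; [lra|]. eapply chord_le1; eauto; lra.
  - destruct (Req_dec u x) as [->|Hne]; [lra|]. eapply chord_le2; eauto; lra.
Qed.

Lemma chord_eq p x y : x <> y -> p y = p x + (y - x) * chord p x y.
Proof. intros; unfold chord; field; lra. Qed.

Lemma rderiv p A B w : convex_on p A B -> A < w < B ->
  exists l, (forall y, w < y <= B -> l <= chord p w y) /\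
    (forall e, 0 < e -> exists d, 0 < d /\ forall y, w < y < w + d -> chord p w y < l + e).
Proof.
  intros Hc Hw.
  set (E := fun v => exists y, w < y <= B /\ v = - chord p w y).
  assert (Hb : bound E).
  { exists (- chord p A w). intros v [y [Hy ->]].
    apply Ropp_le_contravar.
    apply Rle_trans with (chord p A y). eapply chord_le1; eauto; lra. eapply chord_le2; eauto; lra. }
  assert (He : exists x, E x) by (exists (- chord p w B); exists B; split; [lra|reflexivity]).
  destruct (completeness E Hb He) as [m [Hub Hlub]].
  exists (- m). split.
  - intros y Hy. assert (E (- chord p w y)) by (exists y; split; auto).
    specialize (Hub _ H). lra.
  - intros e He0.
    destruct (classic (exists y, w < y <= B /\ chord p w y < - m + e)) as [[y0 [Hy0 Hc0]]|Hn].
    + exists (y0 - w). split; [lra|]. intros y Hy.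
      apply Rle_lt_trans with (chord p w y0); [|exact Hc0].
      destruct (Req_dec y y0) as [->|]; [lra|]. eapply chord_le1; eauto; lra.
    + exfalso. assert (is_upper_bound E (m - e)).
      { intros v [y [Hy ->]]. destruct (Rle_dec (- chord p w y) (m - e)); auto.
        exfalso; apply Hn; exists y; split; auto; lra. }
      specialize (Hlub _ H). lra.
Qed.

Lemma mono_local K s t : s < t -> (forall x, s <= x <= t -> continuity_pt K x) ->
  (forall w, s <= w < t -> exists d, 0 < d /\ forall y, w < y < w + d -> y <= t -> K w <= K y) ->
  K s <= K t.
Proof.
  intros Hst Hc Hl.
  destruct (Rle_dec (K s) (K t)) as [|Hn]; auto. exfalso.
  set (e := (K s - K t) / (2 * (t - s))).
  assert (He : 0 < e) by (unfold e; apply Rdiv_lt_0_compat; lra).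
  set (K' := fun x => K x + e * x).
  destruct (continuity_ab_maj K' s t) as [M [HM HMr]]; [lra| |].
  { intros c Hc'. unfold K'. apply continuity_pt_plus; auto.
    apply continuity_pt_mult. apply continuity_pt_const; intros ??; auto. apply continuity_pt_id. }
  destruct (Req_dec M t) as [->|HMt].
  - specialize (HM s ltac:(lra)). unfold K' in HM.
    assert (e * (t - s) = (K s - K t) / 2) by (unfold e; field; lra). nra.
  - destruct (Hl M ltac:(lra)) as [d [Hd Hy]].
    set (y := M + Rmin d (t - M) / 2).
    assert (Hmin : 0 < Rmin d (t - M)) by (apply Rmin_pos; lra).
    assert (Hm1 : Rmin d (t - M) <= d) by apply Rmin_l.
    assert (Hm2 : Rmin d (t - M) <= t - M) by apply Rmin_r.
    specialize (Hy y ltac:(unfold y; lra) ltac:(unfold y; lra)).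
    specialize (HM y ltac:(unfold y; lra)). unfold K' in HM.
    assert (e * M < e * y) by (apply Rmult_lt_compat_l; unfold y; lra). lra.
Qed.

Lemma frac_lt a b u v p1 p2 : 0 < p1 -> 0 < p2 -> a / p1 + u < b / p2 + v ->
  a * p2 + u * p1 * p2 < b * p1 + v * p1 * p2.
Proof.
  intros H1 H2 H.
  assert (H' : (a / p1 + u) * (p1 * p2) < (b / p2 + v) * (p1 * p2)) by (apply Rmult_lt_compat_r; nra).
  replace ((a / p1 + u) * (p1 * p2)) with (a * p2 + u * p1 * p2) in H' by (field; lra).
  replace ((b / p2 + v) * (p1 * p2)) with (b * p1 + v * p1 * p2) in H' by (field; lra).
  exact H'.
Qed.

Lemma ratio_lt a b p1 p2 : 0 < p1 -> 0 < p2 -> a * p1 < b * p2 -> a / p2 < b / p1.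
Proof.
  intros H1 H2 H.
  replace (a / p2) with ((a * p1) * / (p1 * p2)) by (field; lra).
  replace (b / p1) with ((b * p2) * / (p1 * p2)) by (field; lra).
  apply Rmult_lt_compat_r; [apply Rinv_0_lt_compat; nra | exact H].
Qed.

Lemma abs_bound l u v e : Rabs (u - v) < e -> l * (u - v) <= Rabs l * e.
Proof.
  intros H. apply Rle_trans with (Rabs (l * (u - v))); [apply Rle_abs|].
  rewrite Rabs_mult. apply Rmult_le_compat_l; [apply Rabs_pos| lra].
Qed.

Lemma cont_eps f x : continuity_pt f x -> forall e, 0 < e ->
  exists d, 0 < d /\ forall y, Rabs (y - x) < d -> Rabs (f y - f x) < e.
Proof.
  intros H e He. destruct (H e He) as [d [Hd Hy]]. exists d; split; auto.
  intros y Hyx. destruct (Req_dec y x) as [->|Hne].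
  - rewrite Rminus_diag, Rabs_R0; auto.
  - apply (Hy y). split; [split; [exact I| auto]|]. exact Hyx.
Qed.

Lemma DP (p q : R -> R) A B s t :
  convex_on p A B -> convex_on q A B ->
  (forall x y, A <= x -> x <= y -> y <= B -> q y <= q x) ->
  (forall x, A <= x <= B -> 0 <= p x) ->
  (forall x, continuity_pt p x) -> (forall x, continuity_pt q x) ->
  A < s -> s < t -> t < B -> (forall x, s <= x <= t -> 0 < q x) ->
  p t / q t < p s / q s ->
  exists w w', s <= w < w' /\ w' <= t /\
    forall x y, w <= x -> x < y -> y <= w' -> p y / q y < p x / q x.
Proof.
  intros Hcp Hcq Hmq Hp0 Hctp Hctq HAs Hst HtB Hq0 Hk.
  set (k := fun x => p x / q x).
  set (e := (k s - k t) / (2 * (t - s))).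
  assert (He : 0 < e) by (unfold e, k; apply Rdiv_lt_0_compat; lra).
  set (K := fun x => k x + e * x).
  assert (HA : exists w, s <= w < t /\ forall d, 0 < d ->
             exists y, w < y < w + d /\ y <= t /\ K y < K w).
  { apply NNPP. intros Hn.
    assert (HKst : K s <= K t).
    { apply mono_local; [lra| |].
      - intros x Hx. unfold K, k. apply continuity_pt_plus.
        apply continuity_pt_div; auto. specialize (Hq0 x Hx); lra.
        apply continuity_pt_mult. apply continuity_pt_const; intros ??; auto. apply continuity_pt_id.
      - intros w Hw. apply NNPP. intros Hn2. apply Hn. exists w. split; auto.
        intros d Hd. apply NNPP. intros Hn3. apply Hn2. exists d. split; auto.
        intros y Hy Hyt. destruct (Rle_dec (K w) (K y)); auto. exfalso. apply Hn3.
        exists y. repeat split; try lra. }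
    unfold K in HKst. assert (e * t - e * s = (k s - k t) / 2) by (unfold e; field; lra).
    unfold k in *. lra. }
  destruct HA as [w [Hw HAw]]. clearbody e.
  assert (HwAB : A < w < B) by lra.
  destruct (rderiv p A B w Hcp HwAB) as [lp [Hlp1 Hlp2]].
  destruct (rderiv q A B w Hcq HwAB) as [lq [Hlq1 Hlq2]].
  assert (Hqw : 0 < q w) by (apply Hq0; lra).
  assert (Hqt : 0 < q t) by (apply Hq0; lra).
  assert (Hpw : 0 <= p w) by (apply Hp0; lra).
  assert (HN : lp * q w - p w * lq < 0).
  { set (eta := e * q w * q t / (2 * (p w + 1))).
    assert (Heta : 0 < eta) by (unfold eta; apply Rdiv_lt_0_compat; [repeat apply Rmult_lt_0_compat|]; lra).
    destruct (Hlq2 eta Heta) as [dq [Hdq Hcq']].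
    destruct (HAw dq Hdq) as [y [Hy [Hyt HKy]]].
    assert (Hqy : 0 < q y) by (apply Hq0; lra).
    assert (Hqyt : q t <= q y) by (apply Hmq; lra).
    unfold K, k in HKy.
    pose proof (frac_lt _ _ _ _ _ _ Hqy Hqw HKy) as H1.
    set (cp := chord p w y) in *. set (cq := chord q w y) in *.
    assert (Ep : p y = p w + (y - w) * cp) by (apply chord_eq; lra).
    assert (Eq : q y = q w + (y - w) * cq) by (apply chord_eq; lra).
    assert (H2 : (y - w) * (cp * q w - p w * cq) < (y - w) * (- e * q y * q w)).
    { replace ((y - w) * (cp * q w - p w * cq)) with (p y * q w - p w * q y) by (rewrite Ep, Eq; ring).
      replace ((y - w) * (- e * q y * q w)) with (e * w * q y * q w - e * y * q y * q w) by ring.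
      lra. }
    apply Rmult_lt_reg_l in H2; [|lra].
    assert (Hcp1 : lp <= cp) by (apply Hlp1; lra).
    assert (Hcq1 : cq < lq + eta) by (apply Hcq'; lra).
    assert (H3 : lp * q w <= cp * q w) by (apply Rmult_le_compat_r; lra).
    assert (H4 : p w * cq <= p w * (lq + eta)) by (apply Rmult_le_compat_l; lra).
    assert (H5 : e * q t * q w <= e * q y * q w) by (apply Rmult_le_compat_r; [lra|]; apply Rmult_le_compat_l; lra).
    assert (H6 : p w * eta <= e * q w * q t / 2).
    { unfold eta. replace (p w * (e * q w * q t / (2 * (p w + 1)))) with
        ((e * q w * q t / 2) * (p w / (p w + 1))) by (field; lra).
      assert (0 < e * q w * q t / 2) by (apply Rdiv_lt_0_compat; [repeat apply Rmult_lt_0_compat|]; lra).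
      assert (p w / (p w + 1) <= 1).
      { apply Rmult_le_reg_r with (p w + 1); [lra|]. unfold Rdiv. rewrite Rmult_assoc, Rinv_l; lra. }
      nra. }
    assert (0 < e * q t * q w) by (repeat apply Rmult_lt_0_compat; lra).
    nra. }
  set (Nw := lp * q w - p w * lq) in *.
  set (M := Rabs lp + Rabs lq + 1).
  assert (HM : 0 < M) by (unfold M; pose proof (Rabs_pos lp); pose proof (Rabs_pos lq); lra).
  set (e1 := - Nw / (4 * (q w + 1))).
  assert (He1 : 0 < e1) by (unfold e1; apply Rdiv_lt_0_compat; lra).
  set (eta := - Nw / (4 * M)).
  assert (Heta : 0 < eta) by (unfold eta; apply Rdiv_lt_0_compat; lra).
  destruct (Hlp2 e1 He1) as [dp [Hdp Hcp']].
  destruct (cont_eps p w (Hctp w) eta Heta) as [dcp [Hdcp Hcpw]].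
  destruct (cont_eps q w (Hctq w) eta Heta) as [dcq [Hdcq Hcqw]].
  set (d1 := Rmin (dp / 3) (Rmin ((B - w) / 2) (Rmin dcp (Rmin dcq (t - w))))).
  assert (Hd1 : 0 < d1).
  { unfold d1. repeat apply Rmin_pos; lra. }
  assert (Hd1a : d1 <= dp / 3) by apply Rmin_l.
  assert (Hd1b : d1 <= (B - w) / 2) by (eapply Rle_trans; [apply Rmin_r|apply Rmin_l]).
  assert (Hd1c : d1 <= dcp) by (eapply Rle_trans; [apply Rmin_r|]; eapply Rle_trans; [apply Rmin_r|apply Rmin_l]).
  assert (Hd1d : d1 <= dcq) by (eapply Rle_trans; [apply Rmin_r|]; eapply Rle_trans; [apply Rmin_r|];
                                eapply Rle_trans; [apply Rmin_r|apply Rmin_l]).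
  assert (Hd1e : d1 <= t - w) by (eapply Rle_trans; [apply Rmin_r|]; eapply Rle_trans; [apply Rmin_r|];
                                eapply Rle_trans; [apply Rmin_r|apply Rmin_r]).
  exists w, (w + d1 / 2). split; [lra|]. split; [lra|].
  intros x y Hxy1 Hxy2 Hxy3.
  assert (Hqx : 0 < q x) by (apply Hq0; lra).
  assert (Hqy : 0 < q y) by (apply Hq0; lra).
  assert (Hpx : 0 <= p x) by (apply Hp0; lra).
  assert (Hc1 : chord p x y <= chord p (w + d1) (w + 2 * d1)).
  { eapply chord_mono; eauto; lra. }
  assert (Hc2 : chord p (w + d1) (w + 2 * d1) = 2 * chord p w (w + 2 * d1) - chord p w (w + d1)).
  { unfold chord. field. lra. }
  assert (Hc3 : chord p w (w + 2 * d1) < lp + e1) by (apply Hcp'; lra).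
  assert (Hc4 : lp <= chord p w (w + d1)) by (apply Hlp1; lra).
  assert (Hcpxy : chord p x y < lp + 2 * e1) by lra.
  assert (Hcqxy : lq <= chord q x y).
  { destruct (Req_dec x w) as [->|Hne]. apply Hlq1; lra.
    apply Rle_trans with (chord q w y). apply Hlq1; lra. eapply chord_le2; eauto; lra. }
  set (cp := chord p x y) in *. set (cq := chord q x y) in *.
  assert (Ep : p y = p x + (y - x) * cp) by (apply chord_eq; lra).
  assert (Eq : q y = q x + (y - x) * cq) by (apply chord_eq; lra).
  assert (HNxy : cp * q x - p x * cq < 0).
  { assert (H1 : cp * q x <= (lp + 2 * e1) * q x) by (apply Rmult_le_compat_r; lra).
    assert (H2 : p x * lq <= p x * cq) by (apply Rmult_le_compat_l; lra).
    assert (Hqxw : q x <= q w) by (apply Hmq; lra).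
    assert (H3 : lp * (q x - q w) <= Rabs lp * eta) by (apply abs_bound; apply Hcqw; rewrite Rabs_right; lra).
    assert (H4 : - lq * (p x - p w) <= Rabs (- lq) * eta) by (apply abs_bound; apply Hcpw; rewrite Rabs_right; lra).
    rewrite Rabs_Ropp in H4.
    assert (H5 : 2 * e1 * q x <= 2 * e1 * q w) by (apply Rmult_le_compat_l; lra).
    assert (H6 : (Rabs lp + Rabs lq) * eta < - Nw / 4).
    { unfold eta, M. pose proof (Rabs_pos lp); pose proof (Rabs_pos lq).
      replace ((Rabs lp + Rabs lq) * (- Nw / (4 * (Rabs lp + Rabs lq + 1))))
        with ((- Nw / 4) * ((Rabs lp + Rabs lq) / (Rabs lp + Rabs lq + 1))) by (field; lra).
      assert ((Rabs lp + Rabs lq) / (Rabs lp + Rabs lq + 1) < 1).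
      { apply Rmult_lt_reg_r with (Rabs lp + Rabs lq + 1); [lra|]. unfold Rdiv. rewrite Rmult_assoc, Rinv_l; lra. }
      assert (0 < - Nw / 4) by lra. nra. }
    assert (H7 : 2 * e1 * q w < - Nw / 2).
    { unfold e1. replace (2 * (- Nw / (4 * (q w + 1))) * q w) with ((- Nw / 2) * (q w / (q w + 1))) by (field; lra).
      assert (q w / (q w + 1) < 1).
      { apply Rmult_lt_reg_r with (q w + 1); [lra|]. unfold Rdiv. rewrite Rmult_assoc, Rinv_l; lra. }
      assert (0 < - Nw / 2) by lra. nra. }
    unfold Nw in *. nra. }
  apply ratio_lt; auto.
  rewrite Ep, Eq.
  replace ((p x + (y - x) * cp) * q x) with (p x * (q x + (y - x) * cq) + (y - x) * (cp * q x - p x * cq)) by ring.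
  assert ((y - x) * (cp * q x - p x * cq) < 0) by (nra).
  lra.
Qed.

Lemma first_hit k p r v : p < r -> (forall x, p <= x <= r -> continuity_pt k x) ->
  k p < v -> v <= k r ->
  exists t, p < t <= r /\ k t = v /\ forall z, p <= z < t -> k z < v.
Proof.
  intros Hpr Hc Hp Hr.
  set (T := fun x => p <= x <= r /\ forall z, p <= z <= x -> k z < v).
  assert (Hb : bound T) by (exists r; intros x [Hx _]; lra).
  assert (Hne : exists x, T x) by (exists p; split; [lra|]; intros z Hz; replace z with p by lra; auto).
  destruct (completeness T Hb Hne) as [t [Hub Hlub]].
  assert (Hpt : p <= t) by (apply Hub; destruct Hne as [x Hx]; split; [lra|]; intros z Hz; replace z with p by lra; auto).
  assert (Htr : t <= r) by (apply Hlub; intros x [Hx _]; lra).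
  assert (H1 : forall z, p <= z < t -> k z < v).
  { intros z Hz. destruct (classic (exists x, T x /\ z < x)) as [[x [[Hx Hx2] Hzx]]|Hn].
    - apply Hx2; lra.
    - exfalso. assert (t <= z); [|lra]. apply Hlub. intros x Hx.
      destruct (Rle_dec x z); auto. exfalso; apply Hn; exists x; split; auto; lra. }
  assert (H2 : v <= k t).
  { destruct (Rle_dec v (k t)) as [|Hn]; auto. exfalso.
    destruct (cont_eps k t (Hc t ltac:(lra)) (v - k t) ltac:(lra)) as [d [Hd Hk]].
    destruct (Req_dec t r) as [->|Htr'].
    - lra.
    - set (x := Rmin (t + d / 2) r).
      assert (Hx1 : x <= t + d / 2) by apply Rmin_l. assert (Hx2 : x <= r) by apply Rmin_r.
      assert (Hx3 : t < x) by (unfold x; apply Rmin_glb_lt; lra).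
      assert (T x).
      { split; [lra|]. intros z Hz. destruct (Rlt_dec z t); [apply H1; lra|].
        specialize (Hk z). assert (Rabs (z - t) < d) by (rewrite Rabs_right; lra).
        specialize (Hk H). apply Rabs_def2 in Hk. lra. }
      specialize (Hub x H). lra. }
  assert (Hpt' : p < t) by (destruct (Req_dec p t) as [<-|]; lra).
  assert (H3 : k t <= v).
  { destruct (Rle_dec (k t) v) as [|Hn]; auto. exfalso.
    destruct (cont_eps k t (Hc t ltac:(lra)) (k t - v) ltac:(lra)) as [d [Hd Hk]].
    set (z := Rmax p (t - d / 2)).
    assert (Hz1 : p <= z) by apply Rmax_l. assert (Hz2 : t - d / 2 <= z) by apply Rmax_r.
    assert (Hz3 : z < t) by (unfold z; apply Rmax_lub_lt; lra).
    specialize (H1 z ltac:(lra)). specialize (Hk z).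
    assert (Rabs (z - t) < d) by (rewrite Rabs_left; lra).
    specialize (Hk H). apply Rabs_def2 in Hk. lra. }
  exists t. repeat split; auto; lra.
Qed.

Lemma first_hit_down k p r v : p < r -> (forall x, p <= x <= r -> continuity_pt k x) ->
  v < k p -> k r <= v ->
  exists t, p < t <= r /\ k t = v /\ forall z, p <= z < t -> v < k z.
Proof.
  intros Hpr Hc Hp Hr.
  destruct (first_hit (fun x => - k x) p r (- v) Hpr) as [t [Ht [Hkt Hz]]]; try lra.
  - intros x Hx. apply continuity_pt_opp; auto.
  - exists t. repeat split; try lra. intros z Hz'. specialize (Hz z Hz'). lra.
Qed.

Lemma last_hit k q r v : q < r -> (forall x, q <= x <= r -> continuity_pt k x) ->
  v <= k q -> k r < v ->
  exists s, q <= s < r /\ k s = v /\ forall z, s < z <= r -> k z < v.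
Proof.
  intros Hqr Hc Hq Hr.
  destruct (first_hit (fun x => k (- x)) (- r) (- q) v) as [t [Ht [Hkt Hz]]].
  - lra.
  - intros x Hx. apply (continuity_pt_comp Ropp k). apply continuity_pt_opp, continuity_pt_id.
    apply Hc; lra.
  - rewrite Ropp_involutive; auto.
  - rewrite Ropp_involutive; auto.
  - exists (- t). repeat split; try lra. intros z Hz'. specialize (Hz (- z) ltac:(lra)).
    rewrite Ropp_involutive in Hz; auto.
Qed.

Definition good (p q : R -> R) A B :=
  convex_on p A B /\ convex_on q A B /\
  (forall x y, A <= x -> x <= y -> y <= B -> q y <= q x) /\
  (forall x, A <= x <= B -> 0 <= p x) /\
  (forall x, continuity_pt p x) /\ (forall x, continuity_pt q x).

Lemma NL p q A B a b v1 v2 : good p q A B -> A <= a -> a < b -> b <= B ->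
  (forall x, a <= x <= b -> 0 < q x) ->
  v2 < p a / q a -> v1 < v2 -> p b / q b < v1 ->
  exists w w', a <= w /\ w < w' /\ w' <= b /\
    (forall x y, w <= x -> x < y -> y <= w' -> p y / q y < p x / q x) /\
    v1 < p w' / q w' /\ p w / q w < v2.
Proof.
  intros [Hcp [Hcq [Hmq [Hp0 [Hctp Hctq]]]]] HAa Hab HbB Hq0 H2 H12 H1.
  set (k := fun x => p x / q x).
  assert (Hck : forall x, a <= x <= b -> continuity_pt k x).
  { intros x Hx. unfold k. apply continuity_pt_div; auto. specialize (Hq0 x Hx); lra. }
  set (v2' := v2 - (v2 - v1) / 3). set (v1' := v1 + (v2 - v1) / 3).
  destruct (last_hit k a b v2' Hab Hck) as [s [Hs [Hks Hz1]]]; [unfold k, v2'; lra| unfold k, v2'; lra |].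
  assert (Has : a < s) by (destruct (Req_dec a s) as [<-|]; [unfold k in Hks; unfold v2' in Hks; lra| lra]).
  destruct (first_hit_down k s b v1') as [t [Ht [Hkt Hz2]]]; try lra.
  { intros x Hx; apply Hck; lra. }
  { unfold v1', v2' in *; lra. }
  { unfold k, v1'; lra. }
  assert (Htb : t < b) by (destruct (Req_dec t b) as [->|]; [unfold k in Hkt; unfold v1' in Hkt; lra| lra]).
  destruct (DP p q A B s t Hcp Hcq Hmq Hp0 Hctp Hctq) as [w [w' [Hw [Hw' Hdec]]]]; try lra.
  { intros x Hx; apply Hq0; lra. }
  { fold (k t) (k s). unfold v1', v2' in *. lra. }
  exists w, w'. repeat split; try lra.
  - intros x y Hx Hxy Hy. apply Hdec; lra.
  - fold (k w'). destruct (Req_dec w' t) as [->|]. unfold v1' in *; lra.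
    specialize (Hz2 w' ltac:(lra)). unfold v1' in *; lra.
  - fold (k w). destruct (Req_dec w s) as [->|]. unfold v2' in *; lra.
    specialize (Hz1 w ltac:(lra)). unfold v2' in *; lra.
Qed.

Lemma NLup p q A B a b v1 v2 : good q p A B -> A <= a -> a < b -> b <= B ->
  (forall x, a <= x <= b -> 0 < q x) -> (forall x, a <= x <= b -> 0 < p x) ->
  p a / q a < v1 -> v1 < v2 -> v2 < p b / q b ->
  exists w w', a <= w /\ w < w' /\ w' <= b /\
    (forall x y, w <= x -> x < y -> y <= w' -> p x / q x < p y / q y) /\
    v1 < p w / q w /\ p w' / q w' < v2.
Proof.
  intros Hg HAa Hab HbB Hq0 Hp0 H1 H12 H2.
  assert (Hpos : forall x, a <= x <= b -> 0 < p x / q x).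
  { intros x Hx. apply Rdiv_lt_0_compat; auto. }
  assert (Hinv : forall x, a <= x <= b -> q x / p x = / (p x / q x)).
  { intros x Hx. specialize (Hq0 x Hx); specialize (Hp0 x Hx). field; lra. }
  assert (Hv1 : 0 < v1) by (specialize (Hpos a ltac:(lra)); lra).
  destruct (NL q p A B a b (/ v2) (/ v1) Hg HAa Hab HbB Hp0) as [w [w' [Hw [Hww' [Hw' [Hd [Hv Hv']]]]]]].
  - rewrite Hinv by lra. apply Rinv_lt_contravar; auto. apply Rmult_lt_0_compat; auto. apply Hpos; lra.
  - apply Rinv_lt_contravar; auto. apply Rmult_lt_0_compat; lra.
  - rewrite Hinv by lra. apply Rinv_lt_contravar; [apply Rmult_lt_0_compat; [lra| apply Hpos; lra]| lra].
  - exists w, w'. repeat split; auto.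
    + intros x y Hx Hxy Hy. specialize (Hd x y Hx Hxy Hy).
      rewrite !Hinv in Hd by lra.
      assert (0 < p x / q x) by (apply Hpos; lra). assert (0 < p y / q y) by (apply Hpos; lra).
      apply Rinv_lt_cancel; auto. 
    + rewrite Hinv in Hv' by lra. assert (0 < p w / q w) by (apply Hpos; lra).
      apply Rinv_lt_cancel; auto.
    + rewrite Hinv in Hv by lra. apply Rinv_lt_cancel; auto; lra.
Qed.

Lemma D_cont f : Dbreve f -> forall x, continuity_pt (ext f) x.
Proof. intros [H _]. apply ext_cont; auto. Qed.
Lemma D_conv f : Dbreve f -> forall x y t, I01 x -> I01 y -> 0 <= t <= 1 ->
      f (t * x + (1 - t) * y) <= t * f x + (1 - t) * f y.
Proof. intros [_ [H _]]; auto. Qed.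
Lemma D_dec f : Dbreve f -> forall x y, I01 x -> I01 y -> x < y -> f y < f x.
Proof. intros [_ [_ [H _]]]; auto. Qed.
Lemma D_rng f : Dbreve f -> forall x, I01 x -> 0 <= f x <= 1.
Proof. intros [_ [_ [_ [H _]]]]; auto. Qed.
Lemma D_0 f : Dbreve f -> f 0 = 1.
Proof. intros [_ [_ [_ [_ [H _]]]]]; auto. Qed.
Lemma D_1 f : Dbreve f -> f 1 = 0.
Proof. intros [_ [_ [_ [_ [_ H]]]]]; auto. Qed.

Lemma D_noninc f : Dbreve f -> forall x y, I01 x -> I01 y -> x <= y -> f y <= f x.
Proof. intros Hf x y Hx Hy Hxy. destruct (Req_dec x y) as [->|]; [lra|]. left; apply (D_dec f); auto; lra. Qed.

Lemma D_pos f : Dbreve f -> forall x, 0 <= x < 1 -> 0 < f x.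
Proof. intros Hf x Hx. rewrite <- (D_1 f Hf). apply (D_dec f); unfold I01; auto; lra. Qed.

Lemma cc_in A B x y t : A <= x <= B -> A <= y <= B -> 0 <= t <= 1 -> A <= t * x + (1 - t) * y <= B.
Proof. intros; split; nra. Qed.

Lemma good_fg f g a : Dbreve f -> Dbreve g -> 1 < a ->
  good (fun x => ext f (a * x)) (ext g) 0 (/ a) /\ good (ext g) (fun x => ext f (a * x)) 0 (/ a).
Proof.
  intros Hf Hg Ha.
  assert (HL : 0 < / a < 1) by (split; [apply Rinv_0_lt_compat; lra| rewrite <- Rinv_1; apply Rinv_lt_contravar; lra]).
  assert (Hax : forall x, 0 <= x <= / a -> I01 (a * x)).
  { intros x Hx. split. nra. replace 1 with (a * / a) by (field; lra). apply Rmult_le_compat_l; lra. }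
  assert (Hcf : convex_on (fun x => ext f (a * x)) 0 (/ a)).
  { intros x y t Hx Hy Ht. pose proof (Hax x Hx). pose proof (Hax y Hy).
    pose proof (Hax _ (cc_in _ _ _ _ _ Hx Hy Ht)).
    rewrite !ext_eq; auto. replace (a * (t * x + (1 - t) * y)) with (t * (a * x) + (1 - t) * (a * y)) by ring.
    apply (D_conv f); auto. }
  assert (Hcg : convex_on (ext g) 0 (/ a)).
  { intros x y t Hx Hy Ht. pose proof (cc_in _ _ _ _ _ Hx Hy Ht).
    rewrite !ext_eq; try (unfold I01; lra). apply (D_conv g); unfold I01; auto; lra. }
  assert (Hmf : forall x y, 0 <= x -> x <= y -> y <= / a -> ext f (a * y) <= ext f (a * x)).
  { intros x y H1 H2 H3. rewrite !ext_eq; try (apply Hax; lra). apply (D_noninc f); auto; try (apply Hax; lra). nra. }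
  assert (Hmg : forall x y, 0 <= x -> x <= y -> y <= / a -> ext g y <= ext g x).
  { intros x y H1 H2 H3. rewrite !ext_eq; try (unfold I01; lra). apply (D_noninc g); auto; unfold I01; lra. }
  assert (Hpf : forall x, 0 <= x <= / a -> 0 <= ext f (a * x)).
  { intros x Hx. rewrite ext_eq by (apply Hax; lra). apply (D_rng f); auto. }
  assert (Hpg : forall x, 0 <= x <= / a -> 0 <= ext g x).
  { intros x Hx. rewrite ext_eq by (unfold I01; lra). apply (D_rng g); auto; unfold I01; lra. }
  assert (Hctf : forall x, continuity_pt (fun x => ext f (a * x)) x).
  { intros x. apply (continuity_pt_comp (fun x => a * x) (ext f)).
    apply continuity_pt_mult. apply continuity_pt_const; intros ??; auto. apply continuity_pt_id.
    apply D_cont; auto. }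
  pose proof (D_cont g Hg).
  split; repeat split; auto.
Qed.

Lemma switch_pt (Dl h psi : R -> R) L b u w w' :
  0 <= w -> w < u -> u < w' -> w' <= L ->
  (forall z, w <= z <= w' -> Dl z = psi z * (h z - b)) ->
  (forall z, w <= z <= w' -> 0 < psi z) ->
  h u = b ->
  ((forall x y, w <= x -> x < y -> y <= w' -> h y < h x) \/
   (forall x y, w <= x -> x < y -> y <= w' -> h x < h y)) ->
  sign_switch Dl 0 L (u, u).
Proof.
  intros Hw Hwu Huw Hw'L HD Hpsi Hhu Hmon.
  unfold sign_switch; simpl.
  repeat split; try lra.
  - intros x Hx. replace x with u by lra. rewrite HD by lra. rewrite Hhu; ring.
  - exists (Rmin (u - w) (w' - u)).
    assert (H1 : Rmin (u - w) (w' - u) <= u - w) by apply Rmin_l.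
    assert (H2 : Rmin (u - w) (w' - u) <= w' - u) by apply Rmin_r.
    split; [apply Rmin_pos; lra|]. split.
    + apply Rmin_glb; lra.
    + intros x Hx. rewrite !HD by lra.
      assert (P1 : 0 < psi (u - x)) by (apply Hpsi; lra).
      assert (P2 : 0 < psi (u + x)) by (apply Hpsi; lra).
      assert (Q : (h (u - x) - b) * (h (u + x) - b) < 0).
      { destruct Hmon as [Hm|Hm].
        - assert (h u < h (u - x)) by (apply Hm; lra). assert (h (u + x) < h u) by (apply Hm; lra).
          nra.
        - assert (h (u - x) < h u) by (apply Hm; lra). assert (h u < h (u + x)) by (apply Hm; lra).
          nra. }
      replace (psi (u - x) * (h (u - x) - b) * (psi (u + x) * (h (u + x) - b)))
        with ((psi (u - x) * psi (u + x)) * ((h (u - x) - b) * (h (u + x) - b))) by ring.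
      assert (0 < psi (u - x) * psi (u + x)) by nra. nra.
Qed.

Lemma K3 f g a b0 q0 q1 q2 q3 : Dbreve f -> Dbreve g -> 1 < a -> 0 < b0 ->
  0 <= q0 -> q0 < q1 -> q1 < q2 -> q2 < q3 -> q3 <= / a ->
  0 < f (a * q0) - b0 * g q0 -> f (a * q1) - b0 * g q1 < 0 ->
  0 < f (a * q2) - b0 * g q2 -> f (a * q3) - b0 * g q3 < 0 ->
  crossing_ge f g 3.
Proof.
  intros Hf Hg Ha Hb0 H0 H01 H12 H23 H3 S0 S1 S2 S3.
  set (L := / a) in *.
  assert (HL : 0 < L < 1) by (unfold L; split; [apply Rinv_0_lt_compat; lra| rewrite <- Rinv_1; apply Rinv_lt_contravar; lra]).
  assert (Hax : forall x, 0 <= x <= L -> I01 (a * x)).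
  { intros x Hx. split. nra. replace 1 with (a * / a) by (field; lra). apply Rmult_le_compat_l; unfold L in Hx; lra. }
  assert (HaxL : forall x, 0 <= x < L -> a * x < 1).
  { intros x Hx. replace 1 with (a * / a) by (field; lra). apply Rmult_lt_compat_l; unfold L in Hx; lra. }
  set (phi := fun x => ext f (a * x)). set (psi := ext g).
  destruct (good_fg f g a Hf Hg Ha) as [G1 G2]. fold phi psi L in G1, G2.
  assert (Hpsi : forall x, 0 <= x <= L -> 0 < psi x).
  { intros x Hx. unfold psi. rewrite ext_eq by (unfold I01; lra). apply (D_pos g); auto; lra. }
  assert (Hphi : forall x, 0 <= x < L -> 0 < phi x).
  { intros x Hx. unfold phi. rewrite ext_eq by (apply Hax; lra). apply (D_pos f); auto.
    split; [nra| apply HaxL; auto]. }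
  assert (Hphi0 : forall x, 0 <= x <= L -> 0 <= phi x).
  { intros x Hx. unfold phi. rewrite ext_eq by (apply Hax; lra). apply (D_rng f); auto. }
  set (h := fun x => phi x / psi x).
  assert (Hh0 : forall x, 0 <= x <= L -> 0 <= h x).
  { intros x Hx. unfold h. apply Rmult_le_pos; auto. left; apply Rinv_0_lt_compat; auto. }
  assert (HD : forall b z, 0 <= z <= L -> dil f a z - b * g z = psi z * (h z - b)).
  { intros b z Hz. unfold h, dil, phi, psi. rewrite !ext_eq; try (apply Hax; lra); try (unfold I01; lra).
    field. specialize (Hpsi z Hz). unfold psi in Hpsi. rewrite ext_eq in Hpsi by (unfold I01; lra). lra. }
  assert (Hsign : forall z, 0 <= z <= L -> (0 < f (a * z) - b0 * g z -> b0 < h z) /\ (f (a * z) - b0 * g z < 0 -> h z < b0)).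
  { intros z Hz. pose proof (HD b0 z Hz) as E. unfold dil in E. rewrite E. pose proof (Hpsi z Hz).
    split; intros; nra. }
  assert (T0 : b0 < h q0) by (apply (proj1 (Hsign q0 ltac:(lra))); auto).
  assert (T1 : h q1 < b0) by (apply (proj2 (Hsign q1 ltac:(lra))); auto).
  assert (T2 : b0 < h q2) by (apply (proj1 (Hsign q2 ltac:(lra))); auto).
  assert (T3 : h q3 < b0) by (apply (proj2 (Hsign q3 ltac:(lra))); auto).
  set (lo := Rmax (h q1) (h q3)). set (hi := Rmin (h q0) (h q2)).
  assert (Hlo1 : h q1 <= lo) by apply Rmax_l. assert (Hlo3 : h q3 <= lo) by apply Rmax_r.
  assert (Hhi0 : hi <= h q0) by apply Rmin_l. assert (Hhi2 : hi <= h q2) by apply Rmin_r.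
  assert (Hlob : lo < b0) by (apply Rmax_lub_lt; auto).
  assert (Hhib : b0 < hi) by (apply Rmin_glb_lt; auto).
  set (v1 := (lo + b0) / 2). set (v2 := (b0 + hi) / 2).
  destruct (NLup phi psi 0 L q1 q2 v1 v2 G2) as [w1 [w1' [P1a [P1b [P1c [P1m [P1v P1v']]]]]]]; try lra.
  { intros x Hx; apply Hpsi; lra. }
  { intros x Hx; apply Hphi; lra. }
  { fold (h q1). unfold v1; lra. }
  { unfold v1, v2; lra. }
  { fold (h q2). unfold v2; lra. }
  fold (h w1) (h w1') in P1v, P1v'.
  assert (P1inc : h w1 < h w1') by (apply P1m; lra).
  destruct (NL phi psi 0 L q2 q3 (h w1) (h w1') G1) as [w2 [w2' [P2a [P2b [P2c [P2m [P2v P2v']]]]]]]; try lra.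
  { intros x Hx; apply Hpsi; lra. }
  { fold (h q2). unfold v2 in *; lra. }
  { fold (h q3). unfold v1 in *; lra. }
  fold (h w2) (h w2') in P2v, P2v'.
  assert (P2dec : h w2' < h w2) by (apply P2m; lra).
  destruct (NL phi psi 0 L q0 q1 (h w2') (h w2) G1) as [w3 [w3' [P3a [P3b [P3c [P3m [P3v P3v']]]]]]]; try lra.
  { intros x Hx; apply Hpsi; lra. }
  { fold (h q0). unfold v2 in *; lra. }
  { fold (h q1). unfold v1 in *; lra. }
  fold (h w3) (h w3') in P3v, P3v'.
  assert (P3dec : h w3' < h w3) by (apply P3m; lra).
  set (b := (h w3 + h w3') / 2).
  assert (Hcont : forall x, 0 <= x <= L -> continuity_pt h x).
  { intros x Hx. unfold h. apply continuity_pt_div.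
    destruct G1 as [_ [_ [_ [_ [Hc _]]]]]; auto.
    destruct G1 as [_ [_ [_ [_ [_ Hc]]]]]; auto.
    specialize (Hpsi x Hx); lra. }
  destruct (first_hit_down h w3 w3' b) as [u3 [Hu3 [Hhu3 _]]]; try (unfold b; lra).
  { intros x Hx; apply Hcont; lra. }
  assert (Hu3' : u3 < w3') by (destruct (Req_dec u3 w3') as [->|]; [unfold b in Hhu3; lra|lra]).
  destruct (first_hit_down h w2 w2' b) as [u2 [Hu2 [Hhu2 _]]]; try (unfold b; lra).
  { intros x Hx; apply Hcont; lra. }
  assert (Hu2' : u2 < w2') by (destruct (Req_dec u2 w2') as [->|]; [unfold b in Hhu2; lra|lra]).
  destruct (first_hit h w1 w1' b) as [u1 [Hu1 [Hhu1 _]]]; try (unfold b; lra).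
  { intros x Hx; apply Hcont; lra. }
  assert (Hu1' : u1 < w1') by (destruct (Req_dec u1 w1') as [->|]; [unfold b in Hhu1; lra|lra]).
  assert (HRmin : Rmin 1 (/ a) = L) by (unfold L in *; apply Rmin_right; lra).
  exists a, b. split; [lra|]. split.
  { unfold b. pose proof (Hh0 w1 ltac:(lra)). lra. }
  exists ((u3, u3) :: (u1, u1) :: (u2, u2) :: nil). split; [reflexivity|]. rewrite HRmin. split.
  - constructor. simpl. intros [E|[E|E]]; try inversion E; try lra; auto.
    constructor. simpl. intros [E|E]; try inversion E; try lra; auto.
    constructor. simpl; auto. constructor.
  - constructor; [|constructor; [|constructor; [|constructor]]].
    + apply (switch_pt _ h psi L b u3 w3 w3'); try lra; auto.
      intros z Hz; apply HD; lra. intros z Hz; apply Hpsi; lra.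
    + apply (switch_pt _ h psi L b u1 w1 w1'); try lra; auto.
      intros z Hz; apply HD; lra. intros z Hz; apply Hpsi; lra.
    + apply (switch_pt _ h psi L b u2 w2 w2'); try lra; auto.
      intros z Hz; apply HD; lra. intros z Hz; apply Hpsi; lra.
Qed.

Lemma stride_spec g : Dbreve g ->
  0 <= stride g <= 1 /\ stride_set g (stride g) /\ forall al, stride_set g al -> al <= stride g.
Proof.
  intros Hg.
  set (E := stride_set g).
  assert (Hb1 : forall al, E al -> al <= 1).
  { intros al [H0 H]. specialize (H 1 ltac:(unfold I01; lra)). rewrite (D_1 g Hg) in H. lra. }
  assert (HE0 : E 0).
  { split; [lra|]. intros x Hx. unfold I01 in Hx. lra. }
  destruct (completeness E) as [m [Hub Hlub]].
  { exists 1. intros al Hal. apply Hb1; auto. }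
  { exists 0; auto. }
  assert (Hstr : stride g = m).
  { unfold stride. fold E. rewrite (is_lub_Rbar_unique E (Finite m)); [reflexivity|].
    split.
    - intros x Hx. simpl. apply Hub; auto.
    - intros b Hb. destruct b as [b| |]; simpl.
      + apply Hlub. intros x Hx. specialize (Hb x Hx). simpl in Hb. auto.
      + auto.
      + specialize (Hb 0 HE0). simpl in Hb. auto. }
  rewrite Hstr.
  assert (Hm0 : 0 <= m) by (apply Hub; auto).
  assert (Hm1 : m <= 1) by (apply Hlub; intros al Hal; apply Hb1; auto).
  split; [lra|]. split.
  - split; auto. intros x Hx.
    destruct (Rle_dec (m - x) (m * g x)) as [|Hn]; auto. exfalso.
    assert (Hgx : 0 < 1 - g x) by (unfold I01 in Hx; destruct (Rle_dec 1 (g x)); nra).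
    assert (m <= x / (1 - g x)).
    { apply Hlub. intros al [Hal0 Hal]. specialize (Hal x Hx).
      apply Rmult_le_reg_r with (1 - g x); auto. unfold Rdiv. rewrite Rmult_assoc, Rinv_l; lra. }
    assert (m * (1 - g x) <= x).
    { apply Rmult_le_compat_r with (r := 1 - g x) in H; [|lra].
      unfold Rdiv in H. rewrite Rmult_assoc, Rinv_l in H; lra. }
    lra.
  - intros al Hal; apply Hub; auto.
Qed.

Lemma stride_le f g : Dbreve f -> Dbreve g -> (forall x, I01 x -> g x <= f x) -> stride g <= stride f.
Proof.
  intros Hf Hg Hgf.
  destruct (stride_spec g Hg) as [Hr [[H0 Hs] _]].
  destruct (stride_spec f Hf) as [_ [_ Hmax]].
  apply Hmax. split; auto. intros x Hx. specialize (Hs x Hx). specialize (Hgf x Hx). nra.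
Qed.

Lemma convex01 f : Dbreve f -> convex_on f 0 1.
Proof. intros Hf x y t Hx Hy Ht. apply (D_conv f); auto. Qed.

Lemma part1 f g : Dbreve f -> Dbreve g -> (forall x, I01 x -> g x <= f x) ->
  ~ crossing_ge f g 3 -> 0 < stride g ->
  forall x, 0 <= x <= / stride f -> f (stride f * x) <= g (stride g * x).
Proof.
  intros Hf Hg Hgf Hnc Hsg0.
  pose proof (stride_le f g Hf Hg Hgf) as Hle.
  destruct (stride_spec f Hf) as [Hsf [[_ Hssf] Hmaxf]].
  destruct (stride_spec g Hg) as [Hsg [[_ Hssg] Hmaxg]].
  set (sf := stride f) in *. set (sg := stride g) in *.
  intros x Hx.
  destruct (Rle_dec (f (sf * x)) (g (sg * x))) as [|Hn]; auto. exfalso.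
  assert (Hlt : g (sg * x) < f (sf * x)) by lra.
  assert (Hsfx : sf * x <= 1) by (replace 1 with (sf * / sf) by (field; lra); apply Rmult_le_compat_l; lra).
  assert (Hsgx : sg * x <= sf * x) by (apply Rmult_le_compat_r; lra).
  assert (Hx0 : 0 < x).
  { destruct (Req_dec x 0) as [->|]; [|lra]. rewrite !Rmult_0_r, (D_0 f Hf), (D_0 g Hg) in Hlt. lra. }
  assert (Hsfx1 : sf * x < 1).
  { destruct (Req_dec (sf * x) 1) as [E|]; [|lra]. rewrite E, (D_1 f Hf) in Hlt.
    assert (0 <= g (sg * x)) by (apply (D_rng g); auto; split; nra). lra. }
  set (x0 := sg * x).
  assert (Hx00 : 0 < x0) by (unfold x0; nra).
  destruct (cont_eps (ext f) (sf * x) (D_cont f Hf (sf * x)) (f (sf * x) - g x0)) as [d [Hd Hcd]].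
  { unfold x0; lra. }
  set (t := sf * x + Rmin d (1 - sf * x) / 2).
  assert (Hm : 0 < Rmin d (1 - sf * x)) by (apply Rmin_pos; lra).
  assert (Hm1 : Rmin d (1 - sf * x) <= d) by apply Rmin_l.
  assert (Hm2 : Rmin d (1 - sf * x) <= 1 - sf * x) by apply Rmin_r.
  assert (Ht0 : sf * x < t) by (unfold t; lra).
  assert (Htlt1 : t < 1) by (unfold t; lra).
  assert (Hft : g x0 < f t).
  { specialize (Hcd t). rewrite !ext_eq in Hcd by (unfold I01; split; nra).
    assert (Rabs (t - sf * x) < d) by (rewrite Rabs_right; unfold t; lra).
    specialize (Hcd H). apply Rabs_def2 in Hcd. lra. }
  set (a := t / x0).
  assert (Hax0 : a * x0 = t) by (unfold a; field; lra).
  assert (Hasg : sf < a * sg).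
  { assert (a * sg * x = t) by (rewrite <- Hax0; unfold x0; ring).
    assert (sf * x < a * sg * x) by lra. apply Rmult_lt_reg_r with x; auto. }
  assert (Ha1 : 1 < a).
  { assert (a * x0 > x0) by (unfold x0; nra). nra. }
  set (al := (sf + a * sg) / 2).
  assert (Hal : ~ stride_set f al) by (intros H; specialize (Hmaxf al H); unfold al in *; lra).
  assert (Ht1e : exists t1, I01 t1 /\ al * f t1 < al - t1).
  { apply NNPP. intros Hn2. apply Hal. split; [unfold al; lra|]. intros y Hy.
    destruct (Rle_dec (al - y) (al * f y)); auto. exfalso; apply Hn2; exists y; split; auto; lra. }
  destruct Ht1e as [t1 [Ht1I Ht1]].
  assert (Ht10 : 0 < t1).
  { destruct (Req_dec t1 0) as [->|]; [|unfold I01 in Ht1I; lra]. rewrite (D_0 f Hf) in Ht1. lra. }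
  set (q1 := Rmin (t1 / a) (x0 / 2)).
  assert (Hq1a : q1 <= t1 / a) by apply Rmin_l. assert (Hq1b : q1 <= x0 / 2) by apply Rmin_r.
  assert (Hq10 : 0 < q1) by (apply Rmin_pos; [apply Rdiv_lt_0_compat|]; lra).
  set (y := a * q1).
  assert (Hy0 : 0 < y) by (unfold y; nra).
  assert (Hyt1 : y <= t1) by (unfold y; replace t1 with (a * (t1 / a)) by (field; lra); apply Rmult_le_compat_l; lra).
  assert (Hc1 : t1 * (1 - f y) >= y * (1 - f t1)).
  { destruct (Req_dec y t1) as [->|]; [lra|].
    pose proof (three_point f 0 1 0 y t1 (convex01 f Hf)) as T.
    rewrite (D_0 f Hf) in T. assert (t1 <= 1) by (unfold I01 in Ht1I; lra).
    specialize (T ltac:(lra) ltac:(lra) ltac:(lra) ltac:(lra)). lra. }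
  assert (Hc2 : y < al * (1 - f y)).
  { assert (al * t1 * (1 - f y) >= al * y * (1 - f t1)).
    { assert (0 < al) by (unfold al; lra). nra. }
    assert (y * t1 < al * y * (1 - f t1)) by nra.
    nra. }
  assert (Hq1I : I01 q1) by (unfold I01; unfold x0 in *; split; nra).
  assert (Hc3 : sg - q1 <= sg * g q1) by (apply Hssg; auto).
  assert (Hgq1 : 0 < g q1) by (apply (D_pos g); auto; unfold I01 in Hq1I; split; unfold x0 in *; nra).
  assert (Hfyg : f y < g q1).
  { destruct (Rlt_dec (f y) (g q1)) as [|Hn2]; auto. exfalso.
    assert (0 < al) by (unfold al; lra).
    assert (al * (1 - f y) <= al * (1 - g q1)) by (apply Rmult_le_compat_l; lra).
    assert (sg * (al * (1 - g q1)) <= al * q1) by nra.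
    assert (sg * y < al * q1) by nra.
    unfold y in *. assert (sg * a < al) by nra. unfold al in *. lra. }
  set (b0 := (1 + f y / g q1) / 2).
  assert (Hfy0 : 0 <= f y) by (apply (D_rng f); auto; unfold I01 in *; lra).
  assert (Hr : f y / g q1 < 1) by (apply Rmult_lt_reg_r with (g q1); auto; unfold Rdiv; rewrite Rmult_assoc, Rinv_l; lra).
  assert (Hr0 : 0 <= f y / g q1) by (apply Rmult_le_pos; auto; left; apply Rinv_0_lt_compat; auto).
  assert (Hb0 : 0 < b0 < 1) by (unfold b0; lra).
  assert (Hx0a : x0 < / a).
  { apply Rmult_lt_reg_l with a; [lra|]. rewrite Rinv_r by lra. lra. }
  apply Hnc. apply (K3 f g a b0 0 q1 x0 (/ a)); auto; try lra.
  - rewrite Rmult_0_r, (D_0 f Hf), (D_0 g Hg). lra.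
  - fold y. assert (f y / g q1 * g q1 = f y) by (field; lra).
    assert (b0 * g q1 = (g q1 + f y) / 2) by (unfold b0; field; lra). lra.
  - rewrite Hax0. assert (0 <= g x0) by (apply (D_rng g); auto; unfold x0 in *; unfold I01; split; nra). nra.
  - rewrite Rinv_r by lra. rewrite (D_1 f Hf).
    assert (0 < g (/ a)) by (apply (D_pos g); auto; split; [left; apply Rinv_0_lt_compat; lra| rewrite <- Rinv_1; apply Rinv_lt_contravar; lra]). nra.
Qed.

Lemma no_switch_pos Dl Dm cd : (forall x, 0 <= x <= Dm -> 0 <= Dl x) -> ~ sign_switch Dl 0 Dm cd.
Proof.
  intros H [Hc [Hcd [Hd [_ [del [Hdel [Hdm Hp]]]]]]].
  pose proof (Rmin_l (fst cd - 0) (Dm - snd cd)). pose proof (Rmin_r (fst cd - 0) (Dm - snd cd)).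
  specialize (Hp del ltac:(lra)).
  assert (0 <= Dl (fst cd - del)) by (apply H; lra).
  assert (0 <= Dl (snd cd + del)) by (apply H; lra). nra.
Qed.

Lemma no_switch_neg Dl Dm cd : (forall x, 0 <= x <= Dm -> Dl x <= 0) -> ~ sign_switch Dl 0 Dm cd.
Proof.
  intros H [Hc [Hcd [Hd [_ [del [Hdel [Hdm Hp]]]]]]].
  pose proof (Rmin_l (fst cd - 0) (Dm - snd cd)). pose proof (Rmin_r (fst cd - 0) (Dm - snd cd)).
  specialize (Hp del ltac:(lra)).
  assert (Dl (fst cd - del) <= 0) by (apply H; lra).
  assert (Dl (snd cd + del) <= 0) by (apply H; lra). nra.
Qed.

Lemma switch_opp Dl c0 d0 cd : sign_switch Dl c0 d0 cd -> sign_switch (fun x => - Dl x) c0 d0 cd.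
Proof.
  intros [Hc [Hcd [Hd [Hz [del [Hdel [Hdm Hp]]]]]]].
  repeat split; auto. intros x Hx. rewrite Hz; auto; lra.
  exists del. repeat split; auto. intros x Hx. specialize (Hp x Hx). nra.
Qed.

Lemma switch_order Dl c0 d0 c1 d1 c2 d2 :
  sign_switch Dl c0 d0 (c1, d1) -> sign_switch Dl c0 d0 (c2, d2) -> (c1, d1) <> (c2, d2) ->
  d1 < c2 \/ d2 < c1.
Proof.
  intros S1 S2 Hne.
  destruct S1 as [Hc1 [Hcd1 [Hd1 [Hz1 [e1 [He1 [Hm1 Hp1]]]]]]].
  destruct S2 as [Hc2 [Hcd2 [Hd2 [Hz2 [e2 [He2 [Hm2 Hp2]]]]]]]. simpl in *.
  destruct (Rlt_dec d1 c2); auto. destruct (Rlt_dec d2 c1); auto. exfalso.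
  destruct (total_order_T c1 c2) as [[Hlt|Heq]|Hgt].
  - set (x := Rmin e2 (c2 - c1)).
    assert (0 < x) by (apply Rmin_pos; lra).
    assert (x <= e2) by apply Rmin_l. assert (x <= c2 - c1) by apply Rmin_r.
    specialize (Hp2 x ltac:(lra)). rewrite (Hz1 (c2 - x)) in Hp2 by lra. lra.
  - subst c2. destruct (total_order_T d1 d2) as [[Hlt|Heq]|Hgt].
    + set (x := Rmin e1 (d2 - d1)).
      assert (0 < x) by (apply Rmin_pos; lra).
      assert (x <= e1) by apply Rmin_l. assert (x <= d2 - d1) by apply Rmin_r.
      specialize (Hp1 x ltac:(lra)). rewrite (Hz2 (d1 + x)) in Hp1 by lra. lra.
    + subst; auto.
    + set (x := Rmin e2 (d1 - d2)).
      assert (0 < x) by (apply Rmin_pos; lra).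
      assert (x <= e2) by apply Rmin_l. assert (x <= d1 - d2) by apply Rmin_r.
      specialize (Hp2 x ltac:(lra)). rewrite (Hz1 (d2 + x)) in Hp2 by lra. lra.
  - set (x := Rmin e1 (c1 - c2)).
    assert (0 < x) by (apply Rmin_pos; lra).
    assert (x <= e1) by apply Rmin_l. assert (x <= c1 - c2) by apply Rmin_r.
    specialize (Hp1 x ltac:(lra)). rewrite (Hz2 (c1 - x)) in Hp1 by lra. lra.
Qed.

Lemma pattern_ord Dl Dm c1 d1 c2 d2 :
  sign_switch Dl 0 Dm (c1, d1) -> sign_switch Dl 0 Dm (c2, d2) -> d1 < c2 ->
  0 < Dl 0 -> Dl Dm < 0 ->
  exists q0 q1 q2 q3, 0 <= q0 /\ q0 < q1 /\ q1 < q2 /\ q2 < q3 /\ q3 <= Dm /\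
    0 < Dl q0 /\ Dl q1 < 0 /\ 0 < Dl q2 /\ Dl q3 < 0.
Proof.
  intros S1 S2 Hord H0 HD.
  destruct S1 as [Hc1 [Hcd1 [Hd1 [Hz1 [e1 [He1 [Hm1 Hp1]]]]]]].
  destruct S2 as [Hc2 [Hcd2 [Hd2 [Hz2 [e2 [He2 [Hm2 Hp2]]]]]]]. simpl in *.
  pose proof (Rmin_l (c1 - 0) (Dm - d1)). pose proof (Rmin_r (c1 - 0) (Dm - d1)).
  pose proof (Rmin_l (c2 - 0) (Dm - d2)). pose proof (Rmin_r (c2 - 0) (Dm - d2)).
  set (x := Rmin e1 (Rmin e2 ((c2 - d1) / 3)) / 2).
  assert (Hx0 : 0 < Rmin e1 (Rmin e2 ((c2 - d1) / 3))) by (repeat apply Rmin_pos; lra).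
  assert (Hxa : Rmin e1 (Rmin e2 ((c2 - d1) / 3)) <= e1) by apply Rmin_l.
  assert (Hxb : Rmin e1 (Rmin e2 ((c2 - d1) / 3)) <= e2) by (eapply Rle_trans; [apply Rmin_r|apply Rmin_l]).
  assert (Hxc : Rmin e1 (Rmin e2 ((c2 - d1) / 3)) <= (c2 - d1) / 3) by (eapply Rle_trans; [apply Rmin_r|apply Rmin_r]).
  assert (P1 : Dl (c1 - x) * Dl (d1 + x) < 0) by (apply Hp1; unfold x; lra).
  assert (P2 : Dl (c2 - x) * Dl (d2 + x) < 0) by (apply Hp2; unfold x; lra).
  assert (O1 : 0 < c1 - x) by (unfold x; lra).
  assert (O2 : c1 - x < d1 + x) by (unfold x; lra).
  assert (O3 : d1 + x < c2 - x) by (unfold x; lra).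
  assert (O4 : c2 - x < d2 + x) by (unfold x; lra).
  assert (O5 : d2 + x < Dm) by (unfold x; lra).
  destruct (Rlt_dec 0 (Dl (c1 - x))) as [s1|s1]; destruct (Rlt_dec 0 (Dl (c2 - x))) as [s2|s2].
  - exists (c1 - x), (d1 + x), (c2 - x), (d2 + x). repeat split; try lra; nra.
  - exists (c1 - x), (d1 + x), (d2 + x), Dm.
    assert (Dl (c2 - x) < 0) by (destruct (Req_dec (Dl (c2 - x)) 0) as [E|]; [rewrite E in P2; lra| lra]).
    repeat split; try lra; nra.
  - exists 0, (c1 - x), (d1 + x), (d2 + x).
    assert (Dl (c1 - x) < 0) by (destruct (Req_dec (Dl (c1 - x)) 0) as [E|]; [rewrite E in P1; lra| lra]).
    repeat split; try lra; nra.
  - exists 0, (c1 - x), (d1 + x), Dm.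
    assert (Dl (c1 - x) < 0) by (destruct (Req_dec (Dl (c1 - x)) 0) as [E|]; [rewrite E in P1; lra| lra]).
    repeat split; try lra; nra.
Qed.

Lemma pattern2 Dl Dm S1 S2 :
  sign_switch Dl 0 Dm S1 -> sign_switch Dl 0 Dm S2 -> S1 <> S2 ->
  0 < Dl 0 -> Dl Dm < 0 ->
  exists q0 q1 q2 q3, 0 <= q0 /\ q0 < q1 /\ q1 < q2 /\ q2 < q3 /\ q3 <= Dm /\
    0 < Dl q0 /\ Dl q1 < 0 /\ 0 < Dl q2 /\ Dl q3 < 0.
Proof.
  destruct S1 as [c1 d1], S2 as [c2 d2]. intros S1 S2 Hne H0 HD.
  destruct (switch_order Dl 0 Dm c1 d1 c2 d2 S1 S2 Hne) as [Ho|Ho].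
  - exact (pattern_ord Dl Dm c1 d1 c2 d2 S1 S2 Ho H0 HD).
  - exact (pattern_ord Dl Dm c2 d2 c1 d1 S2 S1 Ho H0 HD).
Qed.

Lemma cross23 f g : Dbreve f -> Dbreve g -> (forall x, I01 x -> f x = g x) ->
  crossing_ge f g 2 -> crossing_ge f g 3.
Proof.
  intros Hf Hg Hfg [a [b [Ha [Hb [l [Hlen [Hnd Hall]]]]]]].
  destruct l as [|S1 [|S2 [|S3 l]]]; simpl in Hlen; try discriminate.
  pose proof (Forall_inv Hall) as HS1. pose proof (Forall_inv (Forall_inv_tail Hall)) as HS2.
  assert (Hne : S1 <> S2) by (intros E; inversion Hnd; subst; apply H1; left; auto).
  set (Dl := fun x => dil f a x - b * g x) in *.
  assert (Hg0 : forall x, 0 <= x <= 1 -> 0 <= g x) by (intros; apply (D_rng g); auto).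
  destruct (total_order_T a 1) as [[Hlt|Heq]|Hgt].
  - assert (HD : Rmin 1 (/ a) = 1).
    { apply Rmin_left. rewrite <- Rinv_1. left; apply Rinv_lt_contravar; lra. }
    rewrite HD in HS1, HS2.
    destruct (Rle_dec b 1).
    + exfalso. apply (no_switch_pos Dl 1 S1); auto. intros x Hx. unfold Dl, dil.
      assert (f x <= f (a * x)) by (apply (D_noninc f); auto; unfold I01; try split; nra).
      rewrite (Hfg x) in H by (unfold I01; lra). pose proof (Hg0 x Hx). nra.
    + destruct (pattern2 (fun x => - Dl x) 1 S1 S2) as [q0 [q1 [q2 [q3 [O0 [O1 [O2 [O3 [O4 [P0 [P1 [P2 P3]]]]]]]]]]]];
        try (apply switch_opp; auto); auto.
      * unfold Dl, dil. rewrite Rmult_0_r, (D_0 f Hf), (D_0 g Hg). lra.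
      * unfold Dl, dil. rewrite Rmult_1_r, (D_1 g Hg). assert (0 < f a) by (apply (D_pos f); auto; lra). lra.
      * assert (Htr : forall q, 0 <= q <= 1 -> f (/ a * (a * q)) - / b * g (a * q) = (- Dl q) * / b).
        { intros q Hq. replace (/ a * (a * q)) with q by (field; lra).
          unfold Dl, dil. rewrite (Hfg q) by (unfold I01; lra).
          rewrite <- (Hfg (a * q)) by (unfold I01; split; nra). field. lra. }
        apply (K3 f g (/ a) (/ b) (a * q0) (a * q1) (a * q2) (a * q3)); auto.
        -- rewrite <- Rinv_1. apply Rinv_lt_contravar; lra.
        -- apply Rinv_0_lt_compat; lra.
        -- nra.
        -- apply Rmult_lt_compat_l; lra.
        -- apply Rmult_lt_compat_l; lra.
        -- apply Rmult_lt_compat_l; lra.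
        -- rewrite Rinv_inv. nra.
        -- rewrite Htr by lra. apply Rmult_lt_0_compat; [lra| apply Rinv_0_lt_compat; lra].
        -- rewrite Htr by lra. assert (0 < / b) by (apply Rinv_0_lt_compat; lra). nra.
        -- rewrite Htr by lra. apply Rmult_lt_0_compat; [lra| apply Rinv_0_lt_compat; lra].
        -- rewrite Htr by lra. assert (0 < / b) by (apply Rinv_0_lt_compat; lra). nra.
  - subst a. assert (HD : Rmin 1 (/ 1) = 1) by (rewrite Rinv_1; apply Rmin_left; lra).
    rewrite HD in HS1.
    assert (HDl : forall x, 0 <= x <= 1 -> Dl x = (1 - b) * g x).
    { intros x Hx. unfold Dl, dil. rewrite Rmult_1_l, (Hfg x) by (unfold I01; lra). ring. }
    exfalso. destruct (Rle_dec b 1).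
    + apply (no_switch_pos Dl 1 S1); auto. intros x Hx. rewrite HDl by lra. pose proof (Hg0 x Hx). nra.
    + apply (no_switch_neg Dl 1 S1); auto. intros x Hx. rewrite HDl by lra. pose proof (Hg0 x Hx). nra.
  - assert (HD : Rmin 1 (/ a) = / a).
    { apply Rmin_right. rewrite <- Rinv_1. left; apply Rinv_lt_contravar; lra. }
    assert (HL : 0 < / a < 1) by (split; [apply Rinv_0_lt_compat; lra| rewrite <- Rinv_1; apply Rinv_lt_contravar; lra]).
    assert (Hax : forall x, 0 <= x <= / a -> I01 (a * x)).
    { intros x Hx. split. nra. replace 1 with (a * / a) by (field; lra). apply Rmult_le_compat_l; lra. }
    rewrite HD in HS1, HS2.
    destruct (Rle_dec 1 b).
    + exfalso. apply (no_switch_neg Dl (/ a) S1); auto. intros x Hx. unfold Dl, dil.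
      assert (f (a * x) <= f x) by (apply (D_noninc f Hf x (a * x)); [unfold I01; lra| apply Hax; auto| nra]).
      rewrite (Hfg x) in H by (unfold I01; lra). assert (0 <= g x) by (apply Hg0; lra). nra.
    + destruct (pattern2 Dl (/ a) S1 S2) as [q0 [q1 [q2 [q3 [O0 [O1 [O2 [O3 [O4 [P0 [P1 [P2 P3]]]]]]]]]]]]; auto.
      * unfold Dl, dil. rewrite Rmult_0_r, (D_0 f Hf), (D_0 g Hg). lra.
      * unfold Dl, dil. rewrite Rinv_r, (D_1 f Hf) by lra.
        assert (0 < g (/ a)) by (apply (D_pos g); auto; lra). nra.
      * apply (K3 f g a b q0 q1 q2 q3); auto.
Qed.

Lemma exR h : Dbreve h -> forall a b, 0 <= a -> a <= b -> b <= 1 -> ex_RInt h a b.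
Proof.
  intros Hh a b H1 H2 H3.
  apply (ex_RInt_ext (ext h)).
  - intros x Hx. rewrite Rmin_left in Hx by lra. rewrite Rmax_right in Hx by lra.
    apply ext_eq. unfold I01; lra.
  - apply (ex_RInt_continuous (V := R_CompleteNormedModule)). intros z Hz. apply continuity_pt_filterlim. apply D_cont; auto.
Qed.

Lemma part2 f g sf sg : Dbreve f -> Dbreve g -> 0 < sg -> sg < sf ->
  (forall x, 0 <= x <= / sf -> f (sf * x) <= g (sg * x)) ->
  sg * RInt f 0 1 < sf * RInt g 0 1.
Proof.
  intros Hf Hg Hsg Hsgf P.
  set (r := sg / sf).
  assert (Hr : 0 < r < 1).
  { unfold r; split. apply Rdiv_lt_0_compat; lra.
    apply Rmult_lt_reg_r with sf; [lra|]. unfold Rdiv; rewrite Rmult_assoc, Rinv_l; lra. }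
  assert (Hex1 : ex_RInt (fun x => g (r * x)) 0 1).
  { apply (ex_RInt_ext (fun x => ext g (r * x))).
    - intros x Hx. rewrite Rmin_left in Hx by lra. rewrite Rmax_right in Hx by lra.
      apply ext_eq. unfold I01; split; nra.
    - apply (ex_RInt_continuous (V := R_CompleteNormedModule)). intros z Hz. apply continuity_pt_filterlim.
      apply (continuity_pt_comp (fun x => r * x) (ext g)).
      apply continuity_pt_mult. apply continuity_pt_const; intros ??; auto. apply continuity_pt_id.
      apply D_cont; auto. }
  assert (S1 : RInt f 0 1 <= RInt (fun x => g (r * x)) 0 1).
  { apply RInt_le; auto; [lra| apply exR; auto; lra|].
    intros x Hx. specialize (P (x / sf)).
    replace (sf * (x / sf)) with x in P by (field; lra).
    replace (sg * (x / sf)) with (r * x) in P by (unfold r; field; lra).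
    apply P. split. apply Rmult_le_pos; [lra| left; apply Rinv_0_lt_compat; lra].
    unfold Rdiv. rewrite <- (Rmult_1_l (/ sf)) at 2. apply Rmult_le_compat_r; [left; apply Rinv_0_lt_compat|]; lra. }
  assert (S2 : RInt g 0 r = r * RInt (fun x => g (r * x)) 0 1).
  { assert (Hx : ex_RInt g (r * 0 + 0) (r * 1 + 0)).
    { replace (r * 0 + 0) with 0 by ring. replace (r * 1 + 0) with r by ring. apply exR; auto; lra. }
    pose proof (RInt_comp_lin g r 0 0 1 Hx) as E.
    replace (r * 0 + 0) with 0 in E by ring. replace (r * 1 + 0) with r in E by ring.
    rewrite <- E.
    rewrite (RInt_ext (fun y => scal r (g (r * y + 0))) (fun y => scal r (g (r * y)))).
    2: { intros x _. rewrite Rplus_0_r. reflexivity. }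
    exact (RInt_scal (V := R_CompleteNormedModule) (fun x => g (r * x)) 0 1 r Hex1). }
  assert (S3 : RInt g 0 1 = RInt g 0 r + RInt g r 1).
  { symmetry. apply (RInt_Chasles g 0 r 1); apply exR; auto; lra. }
  assert (S4 : 0 < RInt g r 1).
  { rewrite (RInt_ext g (ext g)).
    2: { intros x Hx. rewrite Rmin_left in Hx by lra. rewrite Rmax_right in Hx by lra.
         symmetry; apply ext_eq. unfold I01; lra. }
    assert (RInt (fun _ => 0) r 1 < RInt (ext g) r 1).
    { apply RInt_lt; [lra| | |].
      - intros x Hx. apply continuity_pt_filterlim. apply D_cont; auto.
      - intros x Hx. apply continuity_pt_filterlim. apply continuity_pt_const. intros ??; auto.
      - intros x Hx. rewrite ext_eq by (unfold I01; lra). apply (D_pos g); auto; lra. }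
    rewrite (RInt_const (V := R_CompleteNormedModule)) in H. change (scal (1 - r) 0) with ((1 - r) * 0) in H. lra. }
  set (I := RInt (fun x => g (r * x)) 0 1) in *.
  assert (Hsgr : sg = sf * r) by (unfold r; field; lra).
  assert (sg * RInt f 0 1 <= sg * I) by (apply Rmult_le_compat_l; lra).
  rewrite S3, S2. rewrite Hsgr in *. nra.
Qed.

Theorem lemma4p3 (f g : R -> R) :
  Dbreve f -> Dbreve g -> dominated g f -> 0 < stride g ->
  (forall x, 0 <= x <= / stride f ->
     dil f (stride f) x <= dil g (stride g) x) /\
  stride g * RInt f 0 1 < stride f * RInt g 0 1.
Proof.
  intros Hf Hg [[H2 H3] Hgf] Hsg.
  pose proof (part1 f g Hf Hg Hgf H3 Hsg) as P.
  split; [exact P|].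
  pose proof (stride_le f g Hf Hg Hgf) as Hle.
  destruct (Req_dec (stride g) (stride f)) as [E|Hne].
  - exfalso. apply H3. apply cross23; auto.
    intros x Hx. apply Rle_antisym; [|apply Hgf; auto].
    specialize (P (x / stride f)). rewrite <- E in P.
    replace (stride g * (x / stride g)) with x in P by (field; lra).
    apply P. unfold I01 in Hx. split. apply Rmult_le_pos; [lra| left; apply Rinv_0_lt_compat; lra].
    unfold Rdiv. rewrite <- (Rmult_1_l (/ stride g)) at 2. apply Rmult_le_compat_r; [left; apply Rinv_0_lt_compat|]; lra.
  - apply part2; auto. lra.
Qed.
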